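(* Let $\sigma$ be a countable relational signature containing a relation symbol of arity at least $2$, and let $\Omega$ be a set of cardinals, each smaller than $2^{\aleph_0}$, with $1\in\Omega$. Let $\mathbf P=\{\mathcal A\in\mathbf S_\sigma:|\mathrm{Aut}(\mathcal A)|\in\Omega\}$. Then $\mathbf P$ is not expressible in $FO(\sigma)$; every abstract logic $L(\sigma)\geq FO(\sigma)$ that can express $\mathbf P$ fails the $\aleph_0$-compactness property; and every such logic which is moreover closed under negation has no sound and complete proof system. In particular this applies to the properties ``$\mathrm{Aut}(\mathcal A)$ is countable'' and ``$\mathrm{Aut}(\mathcal A)$ is finite''.
   Context: $\mathbf S_\sigma$ is the class of $\sigma$-structures; $\mathrm{Aut}(\mathcal A)$ is the automorphism group. An abstract logic over $\sigma$ is a pair $(L(\sigma),\models_{L(\sigma)})$ with $\models_{L(\sigma)}\subseteq\mathbf S_\sigma\times L(\sigma)$ isomorphism-invariant; a class is expressed by it if some sentence is satisfied exactly by its members; $L(\sigma)\geq FO(\sigma)$ means every first-order expressible class is $L(\sigma)$-expressible; $\aleph_0$-compactness: every countable finitely satisfiable set of sentences is satisfiable; closed under negation: each sentence has a sentence true exactly where it is false. A proof system $(\Pi,p,c)$ assigns to each $\pi$ a finite sequence of premisses $p(\pi)$ and a conclusion $c(\pi)$; sound: premisses semantically entail the conclusion; complete: whenever $\Gamma$ entails $\psi$ some $\pi$ has conclusion $\psi$ and all premisses in $\Gamma$. *)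

(* Defs.v *)
From mathcomp Require Import all_boot.
From Stdlib Require Import List.


Record signature := Signature { sym : Type; ar : sym -> nat }.
Arguments ar {s} _ : rename.

Definition countable_signature (S : signature) : Prop :=
  exists f : sym S -> nat, injective f.

Record structure (S : signature) := Structure {
  carrier :> Type;
  carrier_inh : inhabited carrier;
  rel : forall s : sym S, ('I_(ar s) -> carrier) -> Prop }.
Arguments rel {S} _ s _.
Arguments carrier {S} _.

Definition is_iso {S : signature} (A B : structure S) (f : A -> B) : Prop :=
  bijective f /\
  forall (s : sym S) (a : 'I_(ar s) -> A), rel A s a <-> rel B s (fun i => f (a i)).

Definition isomorphic {S : signature} (A B : structure S) : Prop :=
  exists f : A -> B, is_iso A B f.

Definition Aut {S : signature} (A : structure S) : Type :=
  { f : A -> A | is_iso A A f }.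

Definition equinumerous (X Y : Type) : Prop := exists f : X -> Y, bijective f.
Definition card_le (X Y : Type) : Prop := exists f : X -> Y, injective f.
Definition card_lt (X Y : Type) : Prop := card_le X Y /\ ~ card_le Y X.

Inductive form (S : signature) : Type :=
| FEq : nat -> nat -> form S
| FRel : forall s : sym S, ('I_(ar s) -> nat) -> form S
| FNot : form S -> form S
| FAnd : form S -> form S -> form S
| FEx : nat -> form S -> form S.
Arguments FEq {S} _ _.
Arguments FRel {S} s _.
Arguments FNot {S} _.
Arguments FAnd {S} _ _.
Arguments FEx {S} _ _.

Fixpoint free_in {S : signature} (x : nat) (phi : form S) : Prop :=
  match phi with
  | FEq i j => x = i \/ x = j
  | FRel s v => exists k, v k = x
  | FNot p => free_in x p
  | FAnd p q => free_in x p \/ free_in x q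
  | FEx y p => x <> y /\ free_in x p
  end.

Definition is_sentence {S : signature} (phi : form S) : Prop :=
  forall x, ~ free_in x phi.

Definition upd {T : Type} (e : nat -> T) (x : nat) (a : T) : nat -> T :=
  fun y => if Nat.eqb y x then a else e y.

Fixpoint eval {S : signature} (A : structure S) (e : nat -> A) (phi : form S) : Prop :=
  match phi with
  | FEq i j => e i = e j
  | FRel s v => rel A s (fun k => e (v k))
  | FNot p => ~ eval A e p
  | FAnd p q => eval A e p /\ eval A e q
  | FEx x p => exists a : A, eval A (upd e x a) p
  end.

Definition fo_models {S : signature} (A : structure S) (phi : form S) : Prop :=
  forall e : nat -> A, eval A e phi.

Definition FO_expressible {S : signature} (P : structure S -> Prop) : Prop :=
  exists phi : form S, is_sentence phi /\ forall A, fo_models A phi <-> P A.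

Record abstract_logic (S : signature) := AbstractLogic {
  sentence : Type;
  models : structure S -> sentence -> Prop;
  models_iso : forall A B : structure S, isomorphic A B ->
                 forall phi, models A phi <-> models B phi }.
Arguments sentence {S} _.
Arguments models {S} _ _ _.

Definition expressible {S : signature} (L : abstract_logic S) (P : structure S -> Prop) : Prop :=
  exists phi : sentence L, forall A, models L A phi <-> P A.

Definition geq_FO {S : signature} (L : abstract_logic S) : Prop :=
  forall P : structure S -> Prop, FO_expressible P -> expressible L P.

Definition countable_set {X : Type} (T : X -> Prop) : Prop :=
  exists f : X -> nat, forall x y, T x -> T y -> f x = f y -> x = y.

Definition satisfiable {S : signature} (L : abstract_logic S) (T : sentence L -> Prop) : Prop :=
  exists A, forall phi, T phi -> models L A phi.

Definition finitely_satisfiable {S : signature} (L : abstract_logic S)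
    (T : sentence L -> Prop) : Prop :=
  forall l : list (sentence L), (forall phi, List.In phi l -> T phi) ->
    satisfiable L (fun phi => List.In phi l).

Definition aleph0_compact {S : signature} (L : abstract_logic S) : Prop :=
  forall T : sentence L -> Prop, countable_set T -> finitely_satisfiable L T -> satisfiable L T.

Definition closed_under_negation {S : signature} (L : abstract_logic S) : Prop :=
  forall phi : sentence L, exists psi : sentence L,
    forall A, models L A psi <-> ~ models L A phi.

Definition entails {S : signature} (L : abstract_logic S)
    (Gamma : sentence L -> Prop) (psi : sentence L) : Prop :=
  forall A, (forall phi, Gamma phi -> models L A phi) -> models L A psi.

Record proof_system {S : signature} (L : abstract_logic S) := ProofSystem {
  proofs : Type;
  premisses : proofs -> list (sentence L);
  conclusion : proofs -> sentence L }.
Arguments proofs {S L} _.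
Arguments premisses {S L PS} _ : rename.
Arguments conclusion {S L PS} _ : rename.

Definition sound {S : signature} {L : abstract_logic S} (PS : proof_system L) : Prop :=
  forall pi : proofs PS, entails L (fun phi => List.In phi (premisses pi)) (conclusion pi).

Definition complete {S : signature} {L : abstract_logic S} (PS : proof_system L) : Prop :=
  forall (Gamma : sentence L -> Prop) (psi : sentence L), entails L Gamma psi ->
    exists pi : proofs PS, conclusion pi = psi /\
      forall phi, List.In phi (premisses pi) -> Gamma phi.

Definition main_conclusions {S : signature} (P : structure S -> Prop) : Prop :=
  ~ FO_expressible P /\
  (forall L : abstract_logic S, geq_FO L -> expressible L P -> ~ aleph0_compact L) /\
  (forall L : abstract_logic S, geq_FO L -> expressible L P -> closed_under_negation L ->
     ~ exists PS : proof_system L, sound PS /\ complete PS).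

(* Hypotheses on Omega, a set of cardinals represented as an isomorphism-invariant
   class of types. *)
Definition cardinal_set (Omega : Type -> Prop) : Prop :=
  forall X Y : Type, equinumerous X Y -> Omega X -> Omega Y.

(* Main.v *)
From Stdlib Require Import ZArith Lia ClassicalEpsilon FunctionalExtensionality ProofIrrelevance Classical.
From Stdlib Require Cantor.
Require Import Defs.
From mathcomp Require Import all_boot zify.
From Stdlib Require Import List.
Definition relE (S : signature) (R0 : sym S) (X : Type) (Ed : X -> X -> Prop)
  (s : sym S) (a : 'I_(ar s) -> X) : Prop :=
  s = R0 /\ (forall i j : 'I_(ar s), 0 < i -> 0 < j -> a i = a j) /\
  (forall i j : 'I_(ar s), nat_of_ord i = 0 -> nat_of_ord j = 1 -> Ed (a i) (a j)).

Arguments relE {S} R0 {X} Ed s a.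

Definition mkS (S : signature) (R0 : sym S) (X : Type) (x0 : X) (Ed : X -> X -> Prop)
  : structure S := @Structure S X (inhabits x0) (relE R0 Ed).

Arguments mkS {S} R0 {X} x0 Ed.

Definition Erel (S : signature) (R0 : sym S) (A : structure S) (x y : A) : Prop :=
  Defs.rel A R0 (fun i => if nat_of_ord i == 0 then x else y).

Arguments Erel {S} R0 A x y.

Lemma Erel_mkS S (R0 : sym S) (HR : 2 <= ar R0) X x0 Ed (x y : X) :
  Erel R0 (mkS R0 x0 Ed) x y <-> Ed x y.
Proof.
  unfold Erel; simpl; unfold relE; split.
  - intros [_ [_ H]].
    have h0 : 0 < ar R0 by lia.
    have h1 : 1 < ar R0 by lia.
    exact (H (Ordinal h0) (Ordinal h1) erefl erefl).
  - intros H; split; [reflexivity|split].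
    + intros i j hi hj. destruct i as [i ?]; destruct j as [j ?]; simpl in *.
      destruct i; destruct j; try lia; reflexivity.
    + intros i j hi hj. rewrite hi hj. simpl. exact H.
Qed.

Arguments Erel_mkS {S R0} HR {X x0 Ed x y}.

Lemma iso_mkS S (R0 : sym S) X (x0 : X) (Ed : X -> X -> Prop) (f : X -> X) :
  bijective f -> (forall x y, Ed (f x) (f y) <-> Ed x y) ->
  is_iso (mkS R0 x0 Ed) (mkS R0 x0 Ed) f.
Proof.
  intros Hb He. split; [exact Hb|].
  have finj : injective f by apply bij_inj.
  intros s a; simpl; unfold relE; split.
  - intros [h1 [h2 h3]]; split; [exact h1|split].
    + intros i j hi hj; rewrite (h2 i j hi hj); reflexivity.
    + intros i j hi hj; apply He; apply h3; auto.
  - intros [h1 [h2 h3]]; split; [exact h1|split].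
    + intros i j hi hj; apply finj; apply h2; auto.
    + intros i j hi hj; apply He; apply h3; auto.
Qed.

Arguments iso_mkS {S} R0 {X} x0 Ed f _ _.

Lemma is_iso_Erel S (R0 : sym S) (A B : structure S) (f : A -> B) x y :
  is_iso A B f -> (Erel R0 A x y <-> Erel R0 B (f x) (f y)).
Proof.
  intros [_ H]. unfold Erel. rewrite (H R0).
  have -> : (fun i : 'I_(ar R0) => f (if nat_of_ord i == 0 then x else y)) =
            (fun i => if nat_of_ord i == 0 then f x else f y).
  { apply functional_extensionality; intros i; destruct (nat_of_ord i == 0); reflexivity. }
  tauto.
Qed.

Arguments is_iso_Erel {S} R0 {A B f} x y _.

Lemma Aut_eq S (A : structure S) (f g : Aut A) : proj1_sig f = proj1_sig g -> f = g.
Proof.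
  destruct f as [f pf]; destruct g as [g pg]; simpl; intros ->.
  f_equal; apply proof_irrelevance.
Qed.

Lemma id_iso S (A : structure S) : is_iso A A (fun x => x).
Proof.
  split. exists (fun x => x); intros x; reflexivity.
  intros s a; tauto.
Qed.

Definition goodQ (Q : Type -> Prop) : Prop :=
  (forall X : Type, (exists x : X, forall y, y = x) -> Q X) /\
  (forall X : Type, Q X -> ~ card_le (nat -> bool) X).

Lemma cantor : ~ card_le (nat -> bool) nat.
Proof.
  intros [f finj].
  set inv := fun n => epsilon (inhabits (fun _ : nat => true)) (fun g => f g = n).
  set d := fun n => negb (inv n n).
  have Hm : f (inv (f d)) = f d.
  { apply (epsilon_spec (inhabits (fun _ : nat => true)) (fun g => f g = f d)). exists d; reflexivity. }
  have E : inv (f d) = d by apply finj.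
  have : d (f d) = negb (inv (f d) (f d)) by reflexivity.
  rewrite E. destruct (d (f d)); discriminate.
Qed.

Lemma goodQ_Omega (Omega : Type -> Prop) :
  cardinal_set Omega -> (forall X : Type, Omega X -> card_lt X (nat -> bool)) ->
  Omega unit -> goodQ Omega.
Proof.
  intros Hc Hlt Hu; split.
  - intros X [x Hx]. apply (Hc unit X); [|exact Hu].
    exists (fun _ => x). exists (fun _ => tt). intros []; reflexivity. intros y; rewrite (Hx y); reflexivity.
  - intros X HX. exact (proj2 (Hlt X HX)).
Qed.

Lemma goodQ_countable : goodQ (fun X => card_le X nat).
Proof.
  split.
  - intros X [x Hx]. exists (fun _ => 0). intros a b _. rewrite (Hx a) (Hx b). reflexivity.
  - intros X [g ginj] [f finj]. apply cantor. exists (fun h => g (f h)).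
    intros a b H. apply finj, ginj, H.
Qed.

Lemma goodQ_finite : goodQ (fun X => exists n : nat, card_le X 'I_n).
Proof.
  split.
  - intros X [x Hx]. exists 1. exists (fun _ => ord0). intros a b _. rewrite (Hx a) (Hx b). reflexivity.
  - intros X [n [g ginj]] [f finj]. apply cantor. exists (fun h => nat_of_ord (g (f h))).
    intros a b H. apply finj, ginj. apply val_inj. exact H.
Qed.

Lemma rigid_Q S (A : structure S) Q : goodQ Q ->
  (forall f : A -> A, is_iso A A f -> forall x, f x = x) -> Q (Aut A).
Proof.
  intros [HQ _] Hr. apply HQ. exists (exist _ (fun x => x) (@id_iso S A)).
  intros [f pf]. apply Aut_eq; simpl. apply functional_extensionality; intros x. apply Hr; exact pf.
Qed.
Arguments rigid_Q {S A Q} _ _.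
Definition far (t : Z) (u : option Z) : Prop :=
  match u with None => True | Some m => (t < Z.abs m)%Z end.

Record DS := mkDS {
  DX :> Type;
  o : DX;
  dist : DX -> DX -> option Z;
  d_refl : forall x, dist x x = Some 0%Z;
  d_sym : forall x y, dist y x = option_map Z.opp (dist x y);
  d_trans : forall x y z d, dist x y = Some d -> dist x z = option_map (Z.add d) (dist y z);
  d_eq : forall x y, dist x y = Some 0%Z -> x = y;
  d_src : forall x m, dist o x = Some m -> (0 <= m)%Z;
  d_shift : forall x d, (forall m, dist o x = Some m -> (0 <= m + d)%Z) ->
            exists y, dist x y = Some d;
  d_far : forall (l : list DX) (t : Z), exists y, forall z, In z l -> far t (dist z y) }.

Definition dstruct (S : signature) (R0 : sym S) (D : DS) : structure S :=
  mkS R0 (o D) (fun x y => dist D x y = Some 1%Z).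

Arguments dstruct {S} R0 D.

Fixpoint tt (k : nat) : Z := match k with 0 => 1%Z | S k => (2 * tt k)%Z end.
Lemma tt_pos k : (1 <= tt k)%Z.
Proof. induction k; cbn [tt]; lia. Qed.
Lemma tt_S k : tt (S k) = (2 * tt k)%Z.
Proof. reflexivity. Qed.

Definition close (k : nat) (u v : option Z) : Prop :=
  u = v \/ (far (tt k) u /\ far (tt k) v).

Lemma far_mono t t' u : (t' <= t)%Z -> far t u -> far t' u.
Proof. destruct u; simpl; lia. Qed.

Lemma close_mono k u v : close (S k) u v -> close k u v.
Proof.
  intros [->|[h1 h2]]; [left; reflexivity|right].
  have := tt_pos k. rewrite tt_S in h1 h2. split; eapply far_mono; eauto; lia.
Qed.

Lemma close_sym k u v : close k u v -> close k v u.
Proof. intros [->|[h1 h2]]; [left|right]; auto. Qed.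

Lemma close_opp k u v : close k u v -> close k (option_map Z.opp u) (option_map Z.opp v).
Proof.
  intros [->|[h1 h2]]; [left; reflexivity|right].
  destruct u; destruct v; cbn [far option_map] in *; lia.
Qed.

Lemma close_add k u v c : close (S k) u v -> (Z.abs c <= tt k)%Z ->
  close k (option_map (Z.add c) u) (option_map (Z.add c) v).
Proof.
  intros [->|[h1 h2]] hc; [left; reflexivity|right].
  rewrite tt_S in h1 h2. destruct u; destruct v; cbn [far option_map] in *; lia.
Qed.

Lemma close_some k u v c : close k u v -> (Z.abs c <= tt k)%Z -> (u = Some c <-> v = Some c).
Proof.
  intros [->|[h1 h2]] hc; [tauto|].
  destruct u; destruct v; cbn [far] in *; split; intros H; inversion H; subst; lia.
Qed.

Arguments close_some {k u v c} _ _.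

Definition pt (D : DS) (e : nat -> D) (p : option nat) : D :=
  match p with None => o D | Some x => e x end.
Arguments pt {D} e p.
Definition inP (V : list nat) (p : option nat) : Prop :=
  match p with None => True | Some x => In x V end.

Definition Sim (D1 D2 : DS) (k : nat) (V : list nat) (e1 : nat -> D1) (e2 : nat -> D2) : Prop :=
  forall p q, inP V p -> inP V q ->
    close k (dist D1 (pt e1 p) (pt e1 q)) (dist D2 (pt e2 p) (pt e2 q)).

Lemma Sim_sym D1 D2 k V e1 e2 : Sim D1 D2 k V e1 e2 -> Sim D2 D1 k V e2 e1.
Proof. intros H p q hp hq; apply close_sym, H; auto. Qed.

Lemma Sim_mono D1 D2 k V e1 e2 : Sim D1 D2 (S k) V e1 e2 -> Sim D1 D2 k V e1 e2.
Proof. intros H p q hp hq; apply close_mono, H; auto. Qed.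

Lemma classify2 (D1 D2 : DS) (e1 : nat -> D1) (e2 : nat -> D2) V y a b p :
  inP (y :: V) p ->
  (pt (upd e1 y a) p = a /\ pt (upd e2 y b) p = b) \/
  (inP V p /\ pt (upd e1 y a) p = pt e1 p /\ pt (upd e2 y b) p = pt e2 p).
Proof.
  destruct p as [x|]; simpl.
  - intros Hx. unfold upd. destruct (Nat.eqb x y) eqn:E; [left; split; reflexivity|right].
    apply Nat.eqb_neq in E. destruct Hx as [h|h]; [congruence|]. split; auto.
  - intros _; right; split; auto.
Qed.

Arguments classify2 {D1 D2} e1 e2 V y a b p.
Lemma d_opp (D : DS) x y : dist D x y = option_map Z.opp (dist D y x).
Proof. apply d_sym. Qed.

Lemma forth (D1 D2 : DS) k V e1 e2 y (a : D1) :
  Sim D1 D2 (S k) V e1 e2 -> exists b : D2, Sim D1 D2 k (y :: V) (upd e1 y a) (upd e2 y b).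
Proof.
  intros HS.
  destruct (classic (exists p d, inP V p /\ dist D1 (pt e1 p) a = Some d /\ (Z.abs d <= tt k)%Z))
    as [[p [d [hp [hd hdk]]]]|Hfar].
  -
    have [b hb] : exists b, dist D2 (pt e2 p) b = Some d.
    { apply d_shift. intros m hm.
      have Hc := HS None p I hp. simpl in Hc.
      destruct Hc as [Heq|[h1 h2]].
      + rewrite hm in Heq.
        have := d_trans D1 _ _ a _ Heq. rewrite hd. simpl. intros H2.
        have := d_src D1 _ _ H2. lia.
      + rewrite hm in h2. cbn [far] in h2. rewrite tt_S in h2. have := d_src D2 _ _ hm. have := tt_pos k. lia. }
    exists b.
    have Ha : forall q, inP V q -> dist D1 a (pt e1 q) =
              option_map (Z.add (- d)) (dist D1 (pt e1 p) (pt e1 q)).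
    { intros q hq. apply d_trans. rewrite d_sym hd. reflexivity. }
    have Hb : forall q, inP V q -> dist D2 b (pt e2 q) =
              option_map (Z.add (- d)) (dist D2 (pt e2 p) (pt e2 q)).
    { intros q hq. apply d_trans. rewrite d_sym hb. reflexivity. }
    have hdk' : (Z.abs (- d) <= tt k)%Z by lia.
    intros p' q' hp' hq'.
    destruct (classify2 e1 e2 V y a b p' hp') as [[E1 E2]|[hp1 [E1 E2]]];
    destruct (classify2 e1 e2 V y a b q' hq') as [[F1 F2]|[hq1 [F1 F2]]];
    rewrite ?E1 ?F1 ?E2 ?F2.
    + rewrite !d_refl; left; reflexivity.
    + rewrite Ha ?Hb //. apply close_add; auto.
    + rewrite (d_opp D1 _ a) (d_opp D2 _ b) Ha ?Hb //. apply close_opp, close_add; auto.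
    + apply close_mono, HS; auto.
  -
    have Hfar' : forall q, inP V q -> far (tt k) (dist D1 (pt e1 q) a).
    { intros q hq. destruct (dist D1 (pt e1 q) a) as [m|] eqn:E; simpl; [|exact I].
      destruct (Z_lt_le_dec (tt k) (Z.abs m)) as [h|h]; [exact h|].
      exfalso; apply Hfar; exists q, m; auto. }
    destruct (d_far D2 (o D2 :: List.map e2 V) (tt k)) as [b Hb].
    have Hb' : forall q, inP V q -> far (tt k) (dist D2 (pt e2 q) b).
    { intros [x|] hq; apply Hb; simpl; [right; apply in_map; exact hq|left; reflexivity]. }
    exists b.
    intros p' q' hp' hq'.
    destruct (classify2 e1 e2 V y a b p' hp') as [[E1 E2]|[hp1 [E1 E2]]];
    destruct (classify2 e1 e2 V y a b q' hq') as [[F1 F2]|[hq1 [F1 F2]]];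
    rewrite ?E1 ?F1 ?E2 ?F2.
    + rewrite !d_refl; left; reflexivity.
    + right. rewrite (d_opp D1 a) (d_opp D2 b).
      have h1 := Hfar' q' hq1. have h2 := Hb' q' hq1.
      destruct (dist D1 (pt e1 q') a); destruct (dist D2 (pt e2 q') b); cbn [far option_map] in *; lia.
    + right. split; [apply Hfar'|apply Hb']; auto.
    + apply close_mono, HS; auto.
Qed.
Arguments Sim_sym {D1 D2 k V e1 e2} _.
Lemma back (D1 D2 : DS) k V e1 e2 y (b : D2) :
  Sim D1 D2 (S k) V e1 e2 -> exists a : D1, Sim D1 D2 k (y :: V) (upd e1 y a) (upd e2 y b).
Proof.
  intros HS. destruct (forth D2 D1 k V e2 e1 y b (Sim_sym HS)) as [a Ha].
  exists a. apply Sim_sym, Ha.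
Qed.

Fixpoint qd {S : signature} (phi : form S) : nat :=
  match phi with
  | FEq _ _ => 0
  | FRel _ _ => 0
  | FNot p => qd p
  | FAnd p q => Nat.max (qd p) (qd q)
  | FEx _ p => (qd p).+1
  end.

Lemma Sim_eq (D1 D2 : DS) k V e1 e2 x y : Sim D1 D2 k V e1 e2 -> In x V -> In y V ->
  (e1 x = e1 y <-> e2 x = e2 y).
Proof.
  intros HS hx hy. have Hc := HS (Some x) (Some y) hx hy. simpl in Hc.
  have h0 : (Z.abs 0 <= tt k)%Z by (have := tt_pos k; lia).
  split; intros H.
  - apply d_eq. apply (proj1 (close_some Hc h0)). rewrite H d_refl; reflexivity.
  - apply d_eq. apply (proj2 (close_some Hc h0)). rewrite H d_refl; reflexivity.
Qed.

Lemma Sim_edge (D1 D2 : DS) k V e1 e2 x y : Sim D1 D2 k V e1 e2 -> In x V -> In y V ->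
  (dist D1 (e1 x) (e1 y) = Some 1%Z <-> dist D2 (e2 x) (e2 y) = Some 1%Z).
Proof.
  intros HS hx hy. have Hc := HS (Some x) (Some y) hx hy. simpl in Hc.
  apply (close_some Hc). have := tt_pos k; lia.
Qed.

Arguments Sim_eq {D1 D2 k V e1 e2 x y} _ _ _.
Arguments Sim_edge {D1 D2 k V e1 e2 x y} _ _ _.

Lemma EF S (R0 : sym S) (D1 D2 : DS) (phi : form S) : forall k V e1 e2,
  qd phi <= k -> (forall x, free_in x phi -> In x V) -> Sim D1 D2 k V e1 e2 ->
  (eval (dstruct R0 D1) e1 phi <-> eval (dstruct R0 D2) e2 phi).
Proof.
  induction phi as [i j|s v|p IH|p IHp q IHq|y p IH]; intros k V e1 e2 hk hfv HS; simpl in *.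
  - apply (Sim_eq HS); apply hfv; auto.
  - unfold relE.
    have Heq : forall i j : 'I_(ar s), e1 (v i) = e1 (v j) <-> e2 (v i) = e2 (v j).
    { intros i j; apply (Sim_eq HS); apply hfv; [exists i|exists j]; reflexivity. }
    have Hed : forall i j : 'I_(ar s), dist D1 (e1 (v i)) (e1 (v j)) = Some 1%Z <->
                                  dist D2 (e2 (v i)) (e2 (v j)) = Some 1%Z.
    { intros i j; apply (Sim_edge HS); apply hfv; [exists i|exists j]; reflexivity. }
    split; intros [h1 [h2 h3]]; (split; [exact h1|split]);
      intros i j hi hj; first [apply Heq; apply h2; auto | apply Hed; apply h3; auto].
  - have := IH k V e1 e2 hk hfv HS. tauto.
  - have h1 := IHp k V e1 e2 ltac:(lia) ltac:(intros x hx; apply hfv; left; exact hx) HS.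
    have h2 := IHq k V e1 e2 ltac:(lia) ltac:(intros x hx; apply hfv; right; exact hx) HS.
    tauto.
  - destruct k as [|k]; [lia|].
    have hfv' : forall x, free_in x p -> In x (y :: V).
    { intros x hx. destruct (Nat.eq_dec x y) as [->|hne]; [left; reflexivity|right; apply hfv; auto]. }
    split.
    + intros [a Ha]. destruct (forth D1 D2 k V e1 e2 y a HS) as [b Hb].
      exists b. apply (IH k (y :: V) _ _ ltac:(lia) hfv' Hb). exact Ha.
    + intros [b Hb]. destruct (back D1 D2 k V e1 e2 y b HS) as [a Ha].
      exists a. apply (IH k (y :: V) _ _ ltac:(lia) hfv' Ha). exact Hb.
Qed.

Arguments EF {S} R0 {D1 D2} phi k V e1 e2 _ _ _.

Lemma EF_sentence S (R0 : sym S) (D1 D2 : DS) (phi : form S) :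
  is_sentence phi -> (fo_models (dstruct R0 D1) phi <-> fo_models (dstruct R0 D2) phi).
Proof.
  intros Hs.
  have HS : forall (e1 : nat -> D1) (e2 : nat -> D2), Sim D1 D2 (qd phi) nil e1 e2.
  { intros e1 e2 [x|] [y|] hx hy; simpl in *; try contradiction.
    rewrite !d_refl; left; reflexivity. }
  have hfv : forall x, free_in x phi -> In x nil by (intros x hx; exfalso; exact (Hs x hx)).
  split; intros H e.
  - apply (proj1 (EF R0 phi (qd phi) nil (fun _ => o D1) e (leqnn _) hfv (HS _ _))). apply H.
  - apply (proj2 (EF R0 phi (qd phi) nil e (fun _ => o D2) (leqnn _) hfv (HS _ _))). apply H.
Qed.
Fixpoint lsum (l : list nat) : nat := match l with nil => 0 | x :: r => x + lsum r end.
Lemma lsum_in {x l} : In x l -> x <= lsum l.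
Proof. induction l as [|y l IH]; simpl; [tauto|]. intros [->|h]; [lia|]. have := IH h; lia. Qed.

Definition distA (x y : nat) : option Z := Some (Z.of_nat y - Z.of_nat x)%Z.

Definition DA : DS.
Proof.
  refine (@mkDS nat 0 distA _ _ _ _ _ _ _); unfold distA.
  - intros x; f_equal; lia.
  - intros x y; simpl; f_equal; lia.
  - intros x y z d H; inversion H; subst; simpl; f_equal; lia.
  - intros x y H; inversion H; lia.
  - intros x m H; inversion H; lia.
  - intros x d H. exists (Z.to_nat (Z.of_nat x + d)). have := H _ erefl. intros h. f_equal. lia.
  - intros l t. exists (lsum l + Z.to_nat t + 1). intros z hz. have := lsum_in hz. simpl. lia.
Defined.

Ltac elim_eqb :=
  repeat match goal with
  | |- context [Nat.eqb ?a ?b] => let E := fresh "E" in destruct (Nat.eqb a b) eqn:E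
  | H : context [Nat.eqb ?a ?b] |- _ =>
      match type of H with Nat.eqb _ _ = _ => fail 1 | _ => idtac end;
      let E := fresh "E" in destruct (Nat.eqb a b) eqn:E
  end;
  repeat match goal with
  | H : Nat.eqb _ _ = true |- _ => apply Nat.eqb_eq in H
  | H : Nat.eqb _ _ = false |- _ => apply Nat.eqb_neq in H
  end; subst.

Definition distB (x y : nat + nat * Z) : option Z :=
  match x, y with
  | inl m, inl n => Some (Z.of_nat n - Z.of_nat m)%Z
  | inr (i, z), inr (j, w) => if Nat.eqb i j then Some (w - z)%Z else None
  | _, _ => None
  end.

Definition idxB (x : nat + nat * Z) : nat := match x with inl _ => 0 | inr (i, _) => i end.

Definition DB : DS.
Proof.
  refine (@mkDS (nat + nat * Z) (inl 0) distB _ _ _ _ _ _ _); unfold distB.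
  - intros [x|[i z]]; [f_equal; lia|]. rewrite Nat.eqb_refl. f_equal; lia.
  - intros [x|[i z]] [y|[j w]]; simpl; try reflexivity; [f_equal; lia|].
    rewrite Nat.eqb_sym. destruct (Nat.eqb i j); simpl; [f_equal; lia|reflexivity].
  - intros [x|[i z]] [y|[j w]] [u|[l v]] d H; simpl in *; elim_eqb;
      try discriminate; try congruence; try reflexivity;
      inversion H; subst; simpl; try (f_equal; lia); try reflexivity; try congruence.
  - intros [x|[i z]] [y|[j w]] H; try discriminate.
    + inversion H; f_equal; lia.
    + destruct (Nat.eqb i j) eqn:E1; [|discriminate]. apply Nat.eqb_eq in E1; subst.
      inversion H. f_equal. f_equal. lia.
  - intros [x|[i z]] m H; try discriminate. inversion H; lia.
  - intros [x|[i z]] d H.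
    + have := H _ erefl. intros h. exists (inl (Z.to_nat (Z.of_nat x + d))). f_equal; lia.
    + exists (inr (i, (z + d)%Z)). rewrite Nat.eqb_refl. f_equal; lia.
  - intros l t. exists (inr (lsum (List.map idxB l) + 1, 0%Z)). intros [x|[i z]] hz; simpl; [exact I|].
    have h := lsum_in (in_map idxB _ _ hz). simpl in h.
    destruct (Nat.eqb i (lsum (List.map idxB l) + 1)) eqn:E; [|exact I].
    apply Nat.eqb_eq in E. lia.
Defined.

Lemma rigid_A S (R0 : sym S) (HR : 2 <= ar R0) :
  forall f : dstruct R0 DA -> dstruct R0 DA, is_iso _ _ f -> forall x, f x = x.
Proof.
  intros f Hf.
  have HE : forall x y : nat, Erel R0 (dstruct R0 DA) x y <-> y = x + 1.
  { intros x y. unfold dstruct. rewrite (Erel_mkS HR). simpl. unfold distA. split.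
    - intros H; inversion H; lia.
    - intros ->; f_equal; lia. }
  destruct Hf as [[g fg gf] Hrel].
  have Hiso : is_iso (dstruct R0 DA) (dstruct R0 DA) f by (split; [exists g|]; auto).
  have f0 : f 0 = 0.
  { destruct (f 0) as [|n] eqn:E; [reflexivity|exfalso].
    have h : Erel R0 (dstruct R0 DA) (f (g n)) (f 0) by rewrite gf E; apply HE; lia.
    apply (is_iso_Erel R0 (g n) 0 Hiso) in h. apply HE in h. simpl in h. lia. }
  intros x; induction x as [|x IH]; [exact f0|].
  have h : Erel R0 (dstruct R0 DA) x (x.+1) by apply HE; lia.
  apply (@is_iso_Erel _ R0 (dstruct R0 DA) (dstruct R0 DA) f x x.+1 Hiso) in h. apply HE in h. simpl in h. rewrite h IH. lia.
Qed.

Definition shiftB (g : nat -> bool) (c : Z) (x : nat + nat * Z) : nat + nat * Z :=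
  match x with inl m => inl m | inr (i, z) => inr (i, (z + (if g i then c else 0))%Z) end.

Lemma shiftB_iso S (R0 : sym S) g :
  is_iso (dstruct R0 DB) (dstruct R0 DB) (shiftB g 1).
Proof.
  apply iso_mkS.
  - exists (shiftB g (-1)); intros [m|[i z]]; simpl; try reflexivity;
      f_equal; f_equal; destruct (g i); lia.
  - intros [m|[i z]] [n|[j w]]; simpl; try tauto.
    destruct (Nat.eqb i j) eqn:E; [|tauto]. apply Nat.eqb_eq in E; subst.
    destruct (g j); split; intros H; inversion H; f_equal; lia.
Qed.

Arguments shiftB_iso {S} R0 g.

Lemma huge_B S (R0 : sym S) : card_le (nat -> bool) (Aut (dstruct R0 DB)).
Proof.
  exists (fun g => exist _ (shiftB g 1) (shiftB_iso R0 g)).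
  intros g h H. apply (f_equal (@proj1_sig _ _)) in H. simpl in H.
  apply functional_extensionality; intros i.
  have := f_equal (fun F => F (inr (i, 0%Z))) H. simpl.
  destruct (g i); destruct (h i); simpl; intros E; inversion E; auto; lia.
Qed.
Arguments rigid_A {S} R0 HR.
Arguments huge_B {S} R0.
Arguments EF_sentence {S} R0 D1 D2 {phi} _.
Lemma notFO S (R0 : sym S) (HR : 2 <= ar R0) Q (HQ : goodQ Q) :
  ~ FO_expressible (fun A : structure S => Q (Aut A)).
Proof.
  intros [phi [Hs H]].
  have hA : Q (Aut (dstruct R0 DA)) := rigid_Q HQ (rigid_A R0 HR).
  apply H in hA. apply (EF_sentence R0 DA DB Hs) in hA. apply H in hA.
  exact (proj2 HQ _ hA (huge_B R0)).
Qed.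

Definition fedge S (R0 : sym S) (u v : nat) : form S :=
  FRel R0 (fun i : 'I_(ar R0) => if nat_of_ord i == 0 then u else v).
Arguments fedge {S} R0 u v.

Lemma eval_ext S (A : structure S) (e e' : nat -> A) phi :
  (forall x, e x = e' x) -> (eval A e phi <-> eval A e' phi).
Proof. intros H. have -> : e = e' by apply functional_extensionality. tauto. Qed.

Lemma eval_fedge S (R0 : sym S) (A : structure S) e u v :
  eval A e (fedge R0 u v) <-> Erel R0 A (e u) (e v).
Proof.
  simpl. unfold Erel.
  have -> : (fun k : 'I_(ar R0) => e (if nat_of_ord k == 0 then u else v)) =
            (fun k => if nat_of_ord k == 0 then e u else e v).
  { apply functional_extensionality; intros k; destruct (nat_of_ord k == 0); reflexivity. }
  tauto.
Qed.

Lemma free_fedge S (R0 : sym S) x u v : free_in x (fedge R0 u v) -> x = u \/ x = v.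
Proof. simpl. intros [k hk]. destruct (nat_of_ord k == 0); auto. Qed.

Definition trueF (S : signature) : form S := FEx 0 (FEq 0 0).
Arguments trueF {S}.
Lemma eval_trueF S (A : structure S) e : eval A e trueF.
Proof. simpl. exists (e 0). reflexivity. Qed.
Lemma free_trueF {S x} : ~ free_in x (@trueF S).
Proof. simpl. lia. Qed.

Definition Src S (R0 : sym S) (x : nat) : form S := FNot (FEx x.+1 (fedge R0 x.+1 x)).
Arguments Src {S} R0 x.
Definition isSrc S (R0 : sym S) (A : structure S) (a : A) : Prop := ~ exists b, Erel R0 A b a.
Arguments isSrc {S} R0 A a.

Lemma upd_same T (e : nat -> T) x a : upd e x a x = a.
Proof. unfold upd. rewrite Nat.eqb_refl. reflexivity. Qed.
Lemma upd_other T (e : nat -> T) x y a : y <> x -> upd e x a y = e y.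
Proof. intros h. unfold upd. destruct (Nat.eqb y x) eqn:E; [apply Nat.eqb_eq in E; contradiction|reflexivity]. Qed.

Lemma eval_Src S (R0 : sym S) (A : structure S) e x :
  eval A e (Src R0 x) <-> isSrc R0 A (e x).
Proof.
  unfold Src, isSrc. simpl. split; intros H [b Hb]; apply H; exists b.
  - apply eval_fedge. rewrite upd_same upd_other; [exact Hb|lia].
  - apply eval_fedge in Hb. rewrite upd_same upd_other in Hb; [exact Hb|lia].
Qed.

Lemma free_Src S (R0 : sym S) x y : free_in y (Src R0 x) -> y = x.
Proof. simpl. intros [h1 h2]. apply free_fedge in h2. lia. Qed.

Fixpoint reach {S} (R0 : sym S) (n x : nat) : form S :=
  match n with
  | 0 => FEq x x
  | n'.+1 => FEx x.+1 (FAnd (fedge R0 x x.+1) (reach R0 n' x.+1))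
  end.


Fixpoint Path {S} (R0 : sym S) (A : structure S) (n : nat) (a : A) : Prop :=
  match n with
  | 0 => True
  | n'.+1 => exists b, Erel R0 A a b /\ Path R0 A n' b
  end.


Lemma eval_reach S (R0 : sym S) (A : structure S) n : forall e x,
  eval A e (reach R0 n x) <-> Path R0 A n (e x).
Proof.
  induction n as [|n IH]; intros e x; simpl; [tauto|].
  split.
  - intros [b [h1 h2]]. exists b. apply eval_fedge in h1. rewrite upd_same upd_other in h1; [|lia].
    split; [exact h1|]. apply IH in h2. rewrite upd_same in h2. exact h2.
  - intros [b [h1 h2]]. exists b. split.
    + apply eval_fedge. rewrite upd_same upd_other; [exact h1|lia].
    + apply IH. rewrite upd_same. exact h2.
Qed.

Lemma free_reach S (R0 : sym S) n : forall x y, free_in y (reach R0 n x) -> y = x.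
Proof.
  induction n as [|n IH]; intros x y; simpl; [lia|].
  intros [h1 [h2|h2]]; [apply free_fedge in h2|apply IH in h2]; lia.
Qed.

Definition INd S (R0 : sym S) : form S :=
  FNot (FEx 0 (FEx 1 (FEx 2 (FAnd (fedge R0 1 0) (FAnd (fedge R0 2 0) (FNot (FEq 1 2))))))).
Definition OUTd S (R0 : sym S) : form S :=
  FNot (FEx 0 (FEx 1 (FEx 2 (FAnd (fedge R0 0 1) (FAnd (fedge R0 0 2) (FNot (FEq 1 2))))))).
Arguments INd {S} R0. Arguments OUTd {S} R0.

Lemma eval_INd S (R0 : sym S) (A : structure S) e :
  eval A e (INd R0) <-> forall x y z, Erel R0 A y x -> Erel R0 A z x -> y = z.
Proof.
  unfold INd. cbn [eval]. split.
  - intros H x y z h1 h2. apply NNPP. intros h3. apply H. exists x, y, z.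
    rewrite !eval_fedge. unfold upd; simpl. auto.
  - intros H [x [y [z [h1 [h2 h3]]]]]. rewrite !eval_fedge in h1 h2. unfold upd in *; simpl in *.
    apply h3, (H x); auto.
Qed.

Lemma eval_OUTd S (R0 : sym S) (A : structure S) e :
  eval A e (OUTd R0) <-> forall x y z, Erel R0 A x y -> Erel R0 A x z -> y = z.
Proof.
  unfold OUTd. cbn [eval]. split.
  - intros H x y z h1 h2. apply NNPP. intros h3. apply H. exists x, y, z.
    rewrite !eval_fedge. unfold upd; simpl. auto.
  - intros H [x [y [z [h1 [h2 h3]]]]]. rewrite !eval_fedge in h1 h2. unfold upd in *; simpl in *.
    apply h3, (H x); auto.
Qed.

Lemma sent_INd S (R0 : sym S) : is_sentence (INd R0).
Proof.
  intros x. simpl. intros [h0 [h1 [h2 [h|[h|h]]]]]; try (apply free_fedge in h); lia.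
Qed.
Lemma sent_OUTd S (R0 : sym S) : is_sentence (OUTd R0).
Proof.
  intros x. simpl. intros [h0 [h1 [h2 [h|[h|h]]]]]; try (apply free_fedge in h); lia.
Qed.
Lemma eval_ext' {S} {A : structure S} {e e' : nat -> A} {phi} :
  eval A e phi -> (forall x, e x = e' x) -> eval A e' phi.
Proof. intros H1 H2. have <- : e = e' by apply functional_extensionality. exact H1. Qed.

Fixpoint exs {S : signature} (n : nat) (phi : form S) : form S :=
  match n with 0 => phi | n'.+1 => FEx n' (exs n' phi) end.

Lemma eval_exs S (A : structure S) phi n : forall e,
  eval A e (exs n phi) <-> exists g : nat -> A, eval A (fun x => if x < n then g x else e x) phi.
Proof.
  induction n as [|n IH]; intros e; cbn [exs].
  - split.
    + intros H; exists e. apply (eval_ext' H). intros x; reflexivity.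
    + intros [g H]. apply (eval_ext' H). intros x; reflexivity.
  - cbn [eval]. split.
    + intros [a Ha]. apply IH in Ha. destruct Ha as [g Hg].
      exists (fun x => if x < n then g x else a).
      apply (eval_ext' Hg).
      intros x. unfold upd. case: (Nat.eqb_spec x n) => [->|hne].
      * rewrite ltnn ltnSn. reflexivity.
      * have E : (x < n.+1) = (x < n) by (apply/idP/idP; lia).
        rewrite E. destruct (x < n); reflexivity.
    + intros [g Hg]. exists (g n). apply IH. exists g.
      apply (eval_ext' Hg).
      intros x. unfold upd. case: (Nat.eqb_spec x n) => [->|hne].
      * rewrite ltnn ltnSn. reflexivity.
      * have E : (x < n.+1) = (x < n) by (apply/idP/idP; lia).
        rewrite E. destruct (x < n); reflexivity.
Qed.

Lemma free_exs S (phi : form S) n x : free_in x (exs n phi) -> free_in x phi /\ n <= x.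
Proof.
  revert x; induction n as [|n IH]; intros x; cbn [exs]; [intros h; split; [exact h|lia]|].
  cbn [free_in]. intros [h1 h2]. apply IH in h2. destruct h2; split; auto; lia.
Qed.

Definition tup2g {T : Type} {k : nat} (a : 'I_k -> T) (d : T) (x : nat) : T :=
  match (insub x : option 'I_k) with Some j => a j | None => d end.
Lemma tup2g_val T k (a : 'I_k -> T) d (j : 'I_k) : tup2g a d (nat_of_ord j) = a j.
Proof. unfold tup2g. rewrite valK. reflexivity. Qed.

Definition alphaF S (R0 : sym S) (i : nat) : form S :=
  if (2 <= i) && (i < ar R0) then
    FNot (exs (ar R0) (FAnd (FRel R0 (fun j : 'I_(ar R0) => nat_of_ord j)) (FNot (FEq i 1))))
  else trueF.
Arguments alphaF {S} R0 i.

Definition betaF S (R0 : sym S) (s : sym S) : form S :=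
  match excluded_middle_informative (s = R0) with
  | left _ => trueF
  | right _ => FNot (exs (ar s) (FRel s (fun j : 'I_(ar s) => nat_of_ord j)))
  end.
Arguments betaF {S} R0 s.

Lemma sent_alpha S (R0 : sym S) i : is_sentence (alphaF R0 i).
Proof.
  intros x. unfold alphaF. destruct ((2 <= i) && (i < ar R0)) eqn:E; [|apply free_trueF].
  cbn [free_in]. intros h. apply free_exs in h. destruct h as [[h|h] hk]; cbn [free_in] in h.
  - destruct h as [j hj]. have := ltn_ord j. lia.
  - lia.
Qed.

Lemma sent_beta S (R0 : sym S) s : is_sentence (betaF R0 s).
Proof.
  intros x. unfold betaF. destruct (excluded_middle_informative (s = R0)); [apply free_trueF|].
  cbn [free_in]. intros h. apply free_exs in h. destruct h as [h hk]; cbn [free_in] in h.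
  destruct h as [j hj]. have := ltn_ord j. lia.
Qed.

Lemma alpha_fact S (R0 : sym S) (A : structure S) :
  (forall i, fo_models A (alphaF R0 i)) ->
  forall (a : 'I_(ar R0) -> A) (j j1 : 'I_(ar R0)), nat_of_ord j1 = 1 -> 2 <= j ->
    Defs.rel A R0 a -> a j = a j1.
Proof.
  intros H a j j1 h1 h2 Hr. apply NNPP; intros hne.
  have := H (nat_of_ord j) (fun _ => a j). unfold alphaF.
  have -> : (2 <= j) && (j < ar R0) by (apply/andP; split; [exact h2|exact (ltn_ord j)]).
  cbn [eval]. intros Hn; apply Hn. apply eval_exs. exists (tup2g a (a j)).
  cbn [eval]. split.
  - have -> : (fun k : 'I_(ar R0) =>
      (fun x => if x < ar R0 then tup2g a (a j) x else a j) (nat_of_ord k)) = a.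
    { apply functional_extensionality; intros k. rewrite (ltn_ord k) tup2g_val. reflexivity. }
    exact Hr.
  - rewrite (ltn_ord j) tup2g_val.
    have h1' : 1 < ar R0 by (rewrite -h1; exact (ltn_ord j1)).
    rewrite h1'. rewrite -h1 tup2g_val. exact hne.
Qed.

Lemma beta_fact S (R0 : sym S) (A : structure S) :
  (forall s, fo_models A (betaF R0 s)) ->
  forall s (a : 'I_(ar s) -> A), s <> R0 -> ~ Defs.rel A s a.
Proof.
  intros H s a hs Hr. destruct (@carrier_inh S A) as [d].
  have := H s (fun _ => d). unfold betaF.
  destruct (excluded_middle_informative (s = R0)) as [e|_]; [contradiction|].
  cbn [eval]. intros Hn; apply Hn. apply eval_exs. exists (tup2g a d).
  cbn [eval].
  have -> : (fun k : 'I_(ar s) =>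
      (fun x => if x < ar s then tup2g a d x else d) (nat_of_ord k)) = a.
  { apply functional_extensionality; intros k. rewrite (ltn_ord k) tup2g_val. reflexivity. }
  exact Hr.
Qed.
Fixpoint notin {S : signature} (m c : nat) : form S :=
  match c with 0 => trueF | c'.+1 => FAnd (FNot (FEq c' m)) (notin m c') end.

Lemma eval_notin S (A : structure S) e m c :
  eval A e (notin m c) <-> forall i, i < c -> e i <> e m.
Proof.
  induction c as [|c IH]; cbn [notin eval].
  - split; [intros _ i hi; lia|intros _; exists (e 0); reflexivity].
  - rewrite IH. split.
    + intros [h1 h2] i hi. destruct (Nat.eq_dec i c) as [->|hne]; [exact h1|apply h2; lia].
    + intros H; split; [apply H; lia|intros i hi; apply H; lia].
Qed.

Lemma free_notin S m c x : free_in x (@notin S m c) -> x = m \/ x < c.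
Proof.
  induction c as [|c IH]; cbn [notin free_in].
  - intros h; exfalso; exact (free_trueF h).
  - intros [[h|h]|h]; [lia|left; exact h|destruct (IH h); [left|right]; lia].
Qed.

Fixpoint Gf {S : signature} (R0 : sym S) (m n : nat) : form S :=
  match n with
  | 0 => FEx m (FEq m m)
  | n'.+1 => FEx m (FAnd (Src R0 m) (FAnd (notin m m) (Gf R0 m.+1 n')))
  end.

Lemma free_G S (R0 : sym S) n : forall m x, free_in x (Gf R0 m n) -> x < m.
Proof.
  induction n as [|n IH]; intros m x; cbn [Gf free_in].
  - lia.
  - intros [hne [h|[h|h]]].
    + apply free_Src in h; lia.
    + apply free_notin in h; lia.
    + apply IH in h; lia.
Qed.

Definition injOn {T : Type} (h : nat -> T) (k : nat) : Prop :=
  forall i j, i < k -> j < k -> h i = h j -> i = j.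

Lemma G_sound S (R0 : sym S) (A : structure S) n : forall m e,
  eval A e (Gf R0 m n) -> (forall i, i < m -> isSrc R0 A (e i)) -> injOn e m ->
  exists h : nat -> A, (forall i, i < m + n -> isSrc R0 A (h i)) /\ injOn h (m + n).
Proof.
  induction n as [|n IH]; intros m e He Hs Hi.
  - exists e. rewrite addn0. auto.
  - cbn [Gf eval] in He. destruct He as [a [h1 [h2 h3]]].
    apply eval_Src in h1. rewrite upd_same in h1.
    have {}h2 := proj1 (eval_notin _ _ _ _ _) h2.
    destruct (IH m.+1 _ h3) as [h [Hh1 Hh2]].
    + intros i hi. destruct (Nat.eq_dec i m) as [->|hne]; [rewrite upd_same; exact h1|].
      rewrite upd_other; [apply Hs; lia|exact hne].
    + intros i j hi hj E.
      destruct (Nat.eq_dec i m) as [->|hne1]; destruct (Nat.eq_dec j m) as [->|hne2]; auto.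
      * exfalso. apply (h2 j); [lia|]. rewrite E; reflexivity.
      * exfalso. apply (h2 i); [lia|]. exact E.
      * rewrite !upd_other in E; auto. apply Hi; auto; lia.
    + exists h. rewrite addnS. split; [exact Hh1|exact Hh2].
Qed.

Lemma G_complete S (R0 : sym S) (A : structure S) (g : nat -> A) :
  (forall i, isSrc R0 A (g i)) -> (forall i j, g i = g j -> i = j) ->
  forall n m e, (forall i, i < m -> e i = g i) -> eval A e (Gf R0 m n).
Proof.
  intros Hs Hi n; induction n as [|n IH]; intros m e He; cbn [Gf eval].
  - exists (e 0). reflexivity.
  - exists (g m). split; [|split].
    + apply eval_Src. rewrite upd_same. apply Hs.
    + apply eval_notin. intros i hi. rewrite upd_same upd_other; [|lia].
      rewrite He; [|exact hi]. intros E. apply Hi in E. lia.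
    + apply IH. intros i hi. destruct (Nat.eq_dec i m) as [->|hne]; [rewrite upd_same; reflexivity|].
      rewrite upd_other; [apply He; lia|exact hne].
Qed.

Definition gammaF S (R0 : sym S) (n : nat) : form S :=
  FNot (FEx 0 (FAnd (Src R0 0) (FNot (reach R0 n 0)))).
Arguments gammaF {S} R0 n.

Lemma sent_gamma S (R0 : sym S) n : is_sentence (gammaF R0 n).
Proof.
  intros x. cbn [gammaF free_in]. intros [h [h1|h1]]; [apply free_Src in h1|apply free_reach in h1]; lia.
Qed.

Lemma sent_G S (R0 : sym S) n : is_sentence (Gf R0 0 n).
Proof. intros x h. apply free_G in h. lia. Qed.

Lemma eval_gamma S (R0 : sym S) (A : structure S) e n :
  eval A e (gammaF R0 n) <-> forall a, isSrc R0 A a -> Path R0 A n a.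
Proof.
  unfold gammaF. cbn [eval]. split.
  - intros H a ha. apply NNPP; intros hp. apply H. exists a. split.
    + apply eval_Src. rewrite upd_same. exact ha.
    + rewrite eval_reach upd_same. exact hp.
  - intros H [a [h1 h2]]. apply eval_Src in h1. rewrite eval_reach upd_same in h2.
    rewrite upd_same in h1. apply h2, H, h1.
Qed.

Definition Ix (S : signature) : Type := ((nat * nat) + sym S)%type.

Definition theta S (R0 : sym S) (i : Ix S) : form S :=
  match i with
  | inl (0, n) => alphaF R0 n
  | inl (1, _) => INd R0
  | inl (2, _) => OUTd R0
  | inl (3, n) => gammaF R0 n
  | inl (4, n) => Gf R0 0 n
  | inl _ => trueF
  | inr s => betaF R0 s
  end.
Arguments theta {S} R0 i.

Lemma sent_theta S (R0 : sym S) i : is_sentence (theta R0 i).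
Proof.
  destruct i as [[[|[|[|[|[|t]]]]] n]|s]; cbn [theta].
  - apply sent_alpha.
  - apply sent_INd.
  - apply sent_OUTd.
  - apply sent_gamma.
  - apply sent_G.
  - intros x; apply free_trueF.
  - apply sent_beta.
Qed.

Definition bnd S (i : Ix S) : nat := match i with inl (3, n) => n | _ => 0 end.
Arguments bnd {S} i.
(* ---------- the rigid models M_N: paths of lengths N, N+1, N+2, ... ---------- *)
Definition MX (N : nat) : Type := {p : nat * nat | p.2 <= N + p.1}.
Definition MEd (N : nat) (p q : MX N) : Prop :=
  (proj1_sig p).1 = (proj1_sig q).1 /\ (proj1_sig q).2 = (proj1_sig p).2 + 1.
Definition mkM (N i j : nat) (h : j <= N + i) : MX N := exist _ (i, j) h.
Lemma MX_eq N (p q : MX N) : proj1_sig p = proj1_sig q -> p = q.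
Proof. destruct p as [p hp]; destruct q as [q hq]; simpl; intros ->. f_equal. apply eq_irrelevance. Qed.

Definition Mstr S (R0 : sym S) (N : nat) : structure S :=
  mkS R0 (mkM N 0 0 (leq0n _)) (MEd N).
Arguments Mstr {S} R0 N.

Lemma Erel_M S (R0 : sym S) (HR : 2 <= ar R0) N (x y : MX N) :
  Erel R0 (Mstr R0 N) x y <-> MEd N x y.
Proof. exact (Erel_mkS HR). Qed.

Arguments Erel_M {S R0} HR {N x y}.

Lemma M_src S (R0 : sym S) (HR : 2 <= ar R0) N (p : MX N) :
  isSrc R0 (Mstr R0 N) p <-> (proj1_sig p).2 = 0.
Proof.
  unfold isSrc. split.
  - intros H. destruct p as [[i j] hp]; cbn [proj1_sig fst snd] in hp |- *.
    destruct j as [|j]; [reflexivity|exfalso].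
    apply H. have hj : j <= N + i by lia.
    exists (mkM N i j hj). apply (Erel_M HR). unfold MEd; simpl. split; [reflexivity|lia].
  - intros H [b Hb]. apply (Erel_M HR) in Hb. unfold MEd in Hb. lia.
Qed.

Definition isEnd S (R0 : sym S) (A : structure S) (a : A) : Prop := ~ exists b, Erel R0 A a b.
Arguments isEnd {S} R0 A a.

Lemma M_end S (R0 : sym S) (HR : 2 <= ar R0) N (p : MX N) :
  isEnd R0 (Mstr R0 N) p <-> (proj1_sig p).2 = N + (proj1_sig p).1.
Proof.
  unfold isEnd. destruct p as [[i j] hp]; cbn [proj1_sig fst snd] in hp |- *. split.
  - intros H. apply NNPP; intros hne. apply H.
    have hj : j.+1 <= N + i by lia.
    exists (mkM N i j.+1 hj). apply (Erel_M HR). unfold MEd; simpl. split; [reflexivity|lia].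
  - intros H [[[i' j'] hb] Hb]. apply (Erel_M HR) in Hb. unfold MEd in Hb; simpl in *. lia.
Qed.

Arguments M_src {S R0} HR {N p}.
Arguments M_end {S R0} HR {N p}.

Lemma iso_src S (R0 : sym S) (A : structure S) (f : A -> A) a :
  is_iso A A f -> isSrc R0 A a -> isSrc R0 A (f a).
Proof.
  intros Hf Ha [b Hb]. destruct Hf as [[g fg gf] Hr].
  have Hiso : is_iso A A f by (split; [exists g|]; auto).
  apply Ha. exists (g b). apply (is_iso_Erel R0 (g b) a Hiso). rewrite gf. exact Hb.
Qed.

Lemma iso_end S (R0 : sym S) (A : structure S) (f : A -> A) a :
  is_iso A A f -> isEnd R0 A a -> isEnd R0 A (f a).
Proof.
  intros Hf Ha [b Hb]. destruct Hf as [[g fg gf] Hr].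
  have Hiso : is_iso A A f by (split; [exists g|]; auto).
  apply Ha. exists (g b). apply (is_iso_Erel R0 a (g b) Hiso). rewrite gf. exact Hb.
Qed.

Arguments iso_src {S} R0 {A f} a _ _.
Arguments iso_end {S} R0 {A f} a _ _.

Lemma M_rigid S (R0 : sym S) (HR : 2 <= ar R0) N :
  forall f : Mstr R0 N -> Mstr R0 N, is_iso _ _ f -> forall x, f x = x.
Proof.
  intros f Hf.
  have Hstep : forall i j (h : j <= N + i),
      (proj1_sig (f (mkM N i j h))).1 = (proj1_sig (f (mkM N i 0 (leq0n _)))).1 /\
      (proj1_sig (f (mkM N i j h))).2 = j.
  { intros i j; induction j as [|j IH]; intros h.
    - split; [f_equal; f_equal; f_equal; apply MX_eq; reflexivity|].
      apply (M_src HR). apply (@iso_src _ R0 (Mstr R0 N) f (mkM N i 0 h) Hf). apply (M_src HR). reflexivity.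
    - have h' : j <= N + i by lia.
      destruct (IH h') as [IH1 IH2].
      have He : Erel R0 (Mstr R0 N) (mkM N i j h') (mkM N i j.+1 h).
      { apply (Erel_M HR). unfold MEd; simpl. split; [reflexivity|lia]. }
      apply (@is_iso_Erel _ R0 (Mstr R0 N) (Mstr R0 N) f _ _ Hf) in He. apply (Erel_M HR) in He. unfold MEd in He.
      destruct He as [He1 He2]. split; lia. }
  intros [[i j] h].
  have hN : N + i <= N + i by lia.
  destruct (Hstep i (N + i) hN) as [E1 E2].
  have Hend := @iso_end _ R0 (Mstr R0 N) f (mkM N i (N + i) hN) Hf ltac:(apply (M_end HR); reflexivity).
  apply (M_end HR) in Hend. rewrite E2 E1 in Hend.
  destruct (Hstep i j h) as [F1 F2].
  apply MX_eq. change (proj1_sig (f (mkM N i j h)) = (i, j)).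
  destruct (proj1_sig (f (mkM N i j h))) as [a b] eqn:E. cbn [fst snd] in *.
  f_equal; lia.
Qed.
Lemma M_path S (R0 : sym S) (HR : 2 <= ar R0) N n : forall i j (h : j <= N + i),
  j + n <= N + i -> Path R0 (Mstr R0 N) n (mkM N i j h).
Proof.
  induction n as [|n IH]; intros i j h hn; cbn [Path]; [exact I|].
  have h' : j.+1 <= N + i by lia.
  exists (mkM N i j.+1 h'). split.
  - apply (Erel_M HR). unfold MEd; simpl. split; [reflexivity|lia].
  - apply IH. lia.
Qed.

Arguments M_path {S R0} HR {N n} i j h _.

Lemma M_models S (R0 : sym S) (HR : 2 <= ar R0) N (i : Ix S) :
  bnd i <= N -> fo_models (Mstr R0 N) (theta R0 i).
Proof.
  intros hb e.
  destruct i as [[[|[|[|[|[|t]]]]] n]|s]; cbn [theta bnd] in *.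
  -
    unfold alphaF. destruct ((2 <= n) && (n < ar R0)) eqn:E; [|apply eval_trueF].
    move/andP: E => [E1 E2].
    cbn [eval]. rewrite eval_exs. intros [g Hg]. cbn [eval] in Hg. destruct Hg as [Hr Hne].
    destruct Hr as [_ [Hr _]].
    have h1 : 1 < ar R0 by lia.
    have := Hr (Ordinal E2) (Ordinal h1) ltac:(simpl; lia) ltac:(simpl; lia). simpl.
    rewrite E2 h1. intros Heq. apply Hne. rewrite E2 h1. exact Heq.
  -
    apply eval_INd. intros x y z h1 h2. apply (Erel_M HR) in h1. apply (Erel_M HR) in h2.
    unfold MEd in *. apply MX_eq. destruct (proj1_sig y) as [y1 y2]; destruct (proj1_sig z) as [z1 z2].
    cbn [fst snd] in *. f_equal; lia.
  -
    apply eval_OUTd. intros x y z h1 h2. apply (Erel_M HR) in h1. apply (Erel_M HR) in h2.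
    unfold MEd in *. apply MX_eq. destruct (proj1_sig y) as [y1 y2]; destruct (proj1_sig z) as [z1 z2].
    cbn [fst snd] in *. f_equal; lia.
  -
    apply eval_gamma. intros [[i j] h] ha. apply (M_src HR) in ha. cbn [proj1_sig snd] in ha. subst j.
    change (Path R0 (Mstr R0 N) n (mkM N i 0 h)). apply (M_path HR). lia.
  -
    apply (G_complete S R0 (Mstr R0 N) (fun i => mkM N i 0 (leq0n _))).
    + intros i. apply (M_src HR). reflexivity.
    + intros i j E. apply (f_equal (@proj1_sig _ _)) in E. simpl in E. congruence.
    + intros i hi; lia.
  - apply eval_trueF.
  -
    unfold betaF. destruct (excluded_middle_informative (s = R0)) as [_|hs]; [apply eval_trueF|].
    cbn [eval]. rewrite eval_exs. intros [g Hg]. cbn [eval] in Hg. destruct Hg as [Hs _].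
    exact (hs Hs).
Qed.
Definition InD S (R0 : sym S) (A : structure S) : Prop :=
  forall x y z : A, Erel R0 A y x -> Erel R0 A z x -> y = z.
Definition OutD S (R0 : sym S) (A : structure S) : Prop :=
  forall x y z : A, Erel R0 A x y -> Erel R0 A x z -> y = z.
Definition AllPath S (R0 : sym S) (A : structure S) : Prop :=
  forall n (a : A), isSrc R0 A a -> Path R0 A n a.
Arguments InD {S} R0 A. Arguments OutD {S} R0 A. Arguments AllPath {S} R0 A.

Definition succ S (R0 : sym S) (A : structure S) (a : A) : A :=
  epsilon (@carrier_inh S A) (fun b => Erel R0 A a b).
Arguments succ {S} R0 {A} a.

Fixpoint chain {S} (R0 : sym S) {A : structure S} (a : A) (n : nat) : A :=
  match n with 0 => a | n'.+1 => succ R0 (chain R0 a n') end.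


Lemma chain_path S (R0 : sym S) (A : structure S) (Hout : OutD R0 A) :
  forall j m (x : A), Path R0 A (j + m) x -> Path R0 A m (chain R0 x j).
Proof.
  induction j as [|j IH]; intros m x H; [exact H|].
  rewrite addSnnS in H. apply IH in H. cbn [Path] in H. destruct H as [b [h1 h2]].
  cbn [chain].
  have hs : Erel R0 A (chain R0 x j) (succ R0 (chain R0 x j)).
  { unfold succ. apply (epsilon_spec (@carrier_inh S A) (fun b => Erel R0 A (chain R0 x j) b)).
    exists b; exact h1. }
  rewrite -(Hout _ _ _ h1 hs). exact h2.
Qed.
Arguments chain_path {S R0 A} Hout j m x _.

Lemma chain_edge S (R0 : sym S) (A : structure S) (Hout : OutD R0 A) (Hp : AllPath R0 A) x j :
  isSrc R0 A x -> Erel R0 A (chain R0 x j) (chain R0 x j.+1).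
Proof.
  intros hx. have := chain_path Hout j 1 x (Hp _ _ hx). cbn [Path]. intros [b [h1 _]].
  cbn [chain]. unfold succ.
  apply (epsilon_spec (@carrier_inh S A) (fun b => Erel R0 A (chain R0 x j) b)). exists b; exact h1.
Qed.
Arguments chain_edge {S R0 A} Hout Hp {x} j _.

Lemma chain_inj S (R0 : sym S) (A : structure S) (Hin : InD R0 A) (Hout : OutD R0 A) (Hp : AllPath R0 A) :
  forall i j (x y : A), isSrc R0 A x -> isSrc R0 A y -> chain R0 x i = chain R0 y j -> x = y /\ i = j.
Proof.
  induction i as [|i IH]; intros [|j] x y hx hy E.
  - split; [exact E|reflexivity].
  - exfalso. apply hx. exists (chain R0 y j). cbn [chain] in E. rewrite E.
    exact (chain_edge Hout Hp j hy).
  - exfalso. apply hy. exists (chain R0 x i). cbn [chain] in E. rewrite -E.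
    exact (chain_edge Hout Hp i hx).
  - have h1 := chain_edge Hout Hp i hx. have h2 := chain_edge Hout Hp j hy.
    rewrite E in h1. have := Hin _ _ _ h1 h2. intros E'. destruct (IH j x y hx hy E'). split; auto.
Qed.
Arguments chain_inj {S R0 A} Hin Hout Hp i j x y _ _ _.

Lemma chain_pred S (R0 : sym S) (A : structure S) (Hin : InD R0 A) (Hout : OutD R0 A) (Hp : AllPath R0 A)
  (x z : A) j : isSrc R0 A x -> Erel R0 A z (chain R0 x j) -> exists j', j = j'.+1 /\ z = chain R0 x j'.
Proof.
  intros hx hz. destruct j as [|j].
  - exfalso; apply hx; exists z; exact hz.
  - exists j; split; [reflexivity|]. exact (Hin _ _ _ hz (chain_edge Hout Hp j hx)).
Qed.
Arguments chain_pred {S R0 A} Hin Hout Hp {x z j} _ _.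

Lemma chain_succ S (R0 : sym S) (A : structure S) (Hout : OutD R0 A) (Hp : AllPath R0 A)
  (x z : A) j : isSrc R0 A x -> Erel R0 A (chain R0 x j) z -> z = chain R0 x j.+1.
Proof. intros hx hz. exact (Hout _ _ _ hz (chain_edge Hout Hp j hx)). Qed.
Arguments chain_succ {S R0 A} Hout Hp {x z j} _ _.

Lemma pigeon T (h : nat -> T) k : forall L : list T,
  injOn h k -> (forall i, i < k -> In (h i) L) -> k <= length L.
Proof.
  induction k as [|k IH]; intros L Hi HL; [lia|].
  destruct (in_split _ _ (HL k (ltnSn k))) as [L1 [L2 EL]].
  have : k <= length (L1 ++ L2).
  { apply IH.
    - intros i j hi hj; apply Hi; lia.
    - intros i hi. have := HL i ltac:(lia). rewrite EL. intros Hin.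
      apply in_app_or in Hin. apply in_or_app. destruct Hin as [H1|[H2|H2]]; auto.
      exfalso. have := Hi i k ltac:(lia) ltac:(lia) (esym H2). lia. }
  rewrite EL !length_app. simpl. lia.
Qed.
Fixpoint Lseq {T : Type} (next : list T -> T) (n : nat) : list T :=
  match n with 0 => nil | n'.+1 => next (Lseq next n') :: Lseq next n' end.

Lemma Lseq_in T (next : list T -> T) i j : i < j -> In (next (Lseq next i)) (Lseq next j).
Proof.
  induction j as [|j IH]; intros h; [lia|]. cbn [Lseq].
  destruct (Nat.eq_dec i j) as [->|hne]; [left; reflexivity|right; apply IH; lia].
Qed.

Lemma src_seq S (R0 : sym S) (A : structure S) :
  (forall n, exists h : nat -> A, (forall i, i < n -> isSrc R0 A (h i)) /\ injOn h n) ->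
  exists s : nat -> A, (forall i, isSrc R0 A (s i)) /\ (forall i j, s i = s j -> i = j).
Proof.
  intros H.
  set next := fun L : list A => epsilon (@carrier_inh S A) (fun y => isSrc R0 A y /\ ~ In y L).
  have Hnext : forall L, isSrc R0 A (next L) /\ ~ In (next L) L.
  { intros L. apply (epsilon_spec (@carrier_inh S A) (fun y => isSrc R0 A y /\ ~ In y L)).
    destruct (H (length L).+1) as [h [Hs Hi]].
    apply NNPP; intros Hno.
    have : (length L).+1 <= length L; [|lia].
    apply (pigeon _ h); [exact Hi|]. intros i hi. apply NNPP; intros hni. apply Hno.
    exists (h i); split; auto. }
  exists (fun i => next (Lseq next i)). split.
  - intros i; apply Hnext.
  - intros i j E. apply NNPP; intros hne.
    destruct (Nat.lt_total i j) as [h|[h|h]]; [| contradiction |].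
    + apply (proj2 (Hnext (Lseq next j))). rewrite -E. apply Lseq_in; lia.
    + apply (proj2 (Hnext (Lseq next i))). rewrite E. apply Lseq_in; lia.
Qed.

Definition SwapRel S (R0 : sym S) (A : structure S) (s : nat -> A) (g : nat -> bool) (z w : A) : Prop :=
  (exists i j, g i = true /\ z = chain R0 (s (2 * i)) j /\ w = chain R0 (s (2 * i + 1)) j) \/
  (exists i j, g i = true /\ z = chain R0 (s (2 * i + 1)) j /\ w = chain R0 (s (2 * i)) j) \/
  ((~ exists i j, g i = true /\ (z = chain R0 (s (2 * i)) j \/ z = chain R0 (s (2 * i + 1)) j)) /\ w = z).
Arguments SwapRel {S} R0 {A} s g z w.

Lemma chain_s S (R0 : sym S) (A : structure S) (Hin : InD R0 A) (Hout : OutD R0 A) (Hp : AllPath R0 A)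
  (s : nat -> A) (Hs : forall i, isSrc R0 A (s i)) (Hsi : forall i j, s i = s j -> i = j) a b j j' :
  chain R0 (s a) j = chain R0 (s b) j' -> a = b /\ j = j'.
Proof.
  intros E. destruct (chain_inj Hin Hout Hp j j' _ _ (Hs a) (Hs b) E) as [E1 E2].
  split; [apply Hsi; exact E1|exact E2].
Qed.
Arguments chain_s {S R0 A} Hin Hout Hp {s} Hs Hsi {a b j j'} _.

Lemma sw_fun S (R0 : sym S) (A : structure S) (Hin : InD R0 A) (Hout : OutD R0 A) (Hp : AllPath R0 A)
  (s : nat -> A) (Hs : forall i, isSrc R0 A (s i)) (Hsi : forall i j, s i = s j -> i = j) g z w1 w2 :
  SwapRel R0 s g z w1 -> SwapRel R0 s g z w2 -> w1 = w2.
Proof.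
  have C := chain_s Hin Hout Hp Hs Hsi.
  intros [[i [j [hg [-> ->]]]]|[[i [j [hg [-> ->]]]]|[hn ->]]]
         [[i' [j' [hg' [E ->]]]]|[[i' [j' [hg' [E ->]]]]|[hn' ->]]];
    try (destruct (C _ _ _ _ E) as [E1 E2]; subst; try lia;
         have -> : i = i' by lia; reflexivity);
    try (exfalso; apply hn'; do 2 eexists; split; [eassumption|]; (left + right); reflexivity);
    try (exfalso; apply hn; do 2 eexists; split; [eassumption|]; (left + right); eassumption);
    try reflexivity.
Qed.

Lemma sw_sym S (R0 : sym S) (A : structure S) (s : nat -> A) g z w :
  SwapRel R0 s g z w -> SwapRel R0 s g w z.
Proof.
  intros [[i [j [hg [-> ->]]]]|[[i [j [hg [-> ->]]]]|[hn ->]]].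
  - right; left. exists i, j. auto.
  - left. exists i, j. auto.
  - right; right. auto.
Qed.

Lemma sw_tot S (R0 : sym S) (A : structure S) (s : nat -> A) g z : exists w, SwapRel R0 s g z w.
Proof.
  destruct (classic (exists i j, g i = true /\ (z = chain R0 (s (2 * i)) j \/ z = chain R0 (s (2 * i + 1)) j)))
    as [[i [j [hg [E|E]]]]|hn].
  - exists (chain R0 (s (2 * i + 1)) j). left. exists i, j. auto.
  - exists (chain R0 (s (2 * i)) j). right; left. exists i, j. auto.
  - exists z. right; right. auto.
Qed.

Definition sw S (R0 : sym S) (A : structure S) (s : nat -> A) (g : nat -> bool) (z : A) : A :=
  epsilon (@carrier_inh S A) (SwapRel R0 s g z).
Arguments sw {S} R0 {A} s g z.

Lemma sw_spec S (R0 : sym S) (A : structure S) (s : nat -> A) g z : SwapRel R0 s g z (sw R0 s g z).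
Proof. unfold sw. apply epsilon_spec. apply sw_tot. Qed.
Arguments sw_fun {S R0 A} Hin Hout Hp s Hs Hsi g z w1 w2 _ _.
Arguments sw_spec {S} R0 {A} s g z.
Lemma sw_eq S (R0 : sym S) (A : structure S) (Hin : InD R0 A) (Hout : OutD R0 A) (Hp : AllPath R0 A)
  (s : nat -> A) (Hs : forall i, isSrc R0 A (s i)) (Hsi : forall i j, s i = s j -> i = j) g z w :
  SwapRel R0 s g z w -> sw R0 s g z = w.
Proof. intros H. exact (sw_fun Hin Hout Hp s Hs Hsi g z _ _ (sw_spec R0 s g z) H). Qed.
Arguments sw_eq {S R0 A} Hin Hout Hp s Hs Hsi g z w _.

Lemma sw_invol S (R0 : sym S) (A : structure S) (Hin : InD R0 A) (Hout : OutD R0 A) (Hp : AllPath R0 A)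
  (s : nat -> A) (Hs : forall i, isSrc R0 A (s i)) (Hsi : forall i j, s i = s j -> i = j) g z :
  sw R0 s g (sw R0 s g z) = z.
Proof. apply (sw_eq Hin Hout Hp s Hs Hsi). apply sw_sym, sw_spec. Qed.
Arguments sw_invol {S R0 A} Hin Hout Hp s Hs Hsi g z.

Lemma sw_edge S (R0 : sym S) (A : structure S) (Hin : InD R0 A) (Hout : OutD R0 A) (Hp : AllPath R0 A)
  (s : nat -> A) (Hs : forall i, isSrc R0 A (s i)) (Hsi : forall i j, s i = s j -> i = j) g z z' :
  Erel R0 A z z' -> Erel R0 A (sw R0 s g z) (sw R0 s g z').
Proof.
  intros He.
  have Eq := sw_eq Hin Hout Hp s Hs Hsi g.
  destruct (sw_spec R0 s g z) as [[i [j [hg [Ez Ew]]]]|[[i [j [hg [Ez Ew]]]]|[hn Ew]]]; rewrite Ew.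
  - rewrite Ez in He. have Ez' := chain_succ Hout Hp (Hs _) He.
    rewrite (Eq z' (chain R0 (s (2 * i + 1)) j.+1)).
    + apply (chain_edge Hout Hp). apply Hs.
    + left. exists i, j.+1. auto.
  - rewrite Ez in He. have Ez' := chain_succ Hout Hp (Hs _) He.
    rewrite (Eq z' (chain R0 (s (2 * i)) j.+1)).
    + apply (chain_edge Hout Hp). apply Hs.
    + right; left. exists i, j.+1. auto.
  - rewrite (Eq z' z'); [exact He|].
    right; right. split; [|reflexivity].
    intros [i [j [hg [E|E]]]]; rewrite E in He;
      destruct (chain_pred Hin Hout Hp (Hs _) He) as [j' [_ Ej']];
      apply hn; exists i, j'; auto.
Qed.
Arguments sw_edge {S R0 A} Hin Hout Hp s Hs Hsi g z z' _.

Lemma rel_shape S (R0 : sym S) (A : structure S) (i0 i1 : 'I_(ar R0)) :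
  nat_of_ord i0 = 0 -> nat_of_ord i1 = 1 ->
  (forall (a : 'I_(ar R0) -> A) (j j1 : 'I_(ar R0)), nat_of_ord j1 = 1 -> 2 <= j ->
      Defs.rel A R0 a -> a j = a j1) ->
  forall a : 'I_(ar R0) -> A,
    Defs.rel A R0 a <-> (forall j : 'I_(ar R0), 2 <= j -> a j = a i1) /\ Erel R0 A (a i0) (a i1).
Proof.
  intros h0 h1 Hal a.
  have Ea : (forall j : 'I_(ar R0), 2 <= j -> a j = a i1) ->
            (fun i : 'I_(ar R0) => if nat_of_ord i == 0 then a i0 else a i1) = a.
  { intros Hsh. apply functional_extensionality; intros j.
    destruct (nat_of_ord j == 0) eqn:E.
    - f_equal. apply val_inj. simpl. move/eqP: E => E. rewrite E h0. reflexivity.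
    - destruct (Nat.eq_dec (nat_of_ord j) 1) as [E1|E1].
      + f_equal. apply val_inj. simpl. rewrite E1 h1. reflexivity.
      + symmetry. apply Hsh. move/eqP: E => E. lia. }
  split.
  - intros H. have Hsh : forall j : 'I_(ar R0), 2 <= j -> a j = a i1.
    { intros j hj. apply (Hal a j i1 h1 hj H). }
    split; [exact Hsh|]. unfold Erel. rewrite (Ea Hsh). exact H.
  - intros [Hsh He]. unfold Erel in He. rewrite (Ea Hsh) in He. exact He.
Qed.
Arguments rel_shape {S R0 A} i0 i1 _ _ _ a.
Lemma sw_iso S (R0 : sym S) (HR : 2 <= ar R0) (A : structure S)
  (Hin : InD R0 A) (Hout : OutD R0 A) (Hp : AllPath R0 A)
  (Hal : forall (a : 'I_(ar R0) -> A) (j j1 : 'I_(ar R0)), nat_of_ord j1 = 1 -> 2 <= j ->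
      Defs.rel A R0 a -> a j = a j1)
  (Hbe : forall s0 (a : 'I_(ar s0) -> A), s0 <> R0 -> ~ Defs.rel A s0 a)
  (s : nat -> A) (Hs : forall i, isSrc R0 A (s i)) (Hsi : forall i j, s i = s j -> i = j) g :
  is_iso A A (sw R0 s g).
Proof.
  have Inv := sw_invol Hin Hout Hp s Hs Hsi g.
  have Ed := sw_edge Hin Hout Hp s Hs Hsi g.
  have Ed' : forall z z', Erel R0 A (sw R0 s g z) (sw R0 s g z') -> Erel R0 A z z'.
  { intros z z' H. rewrite -(Inv z) -(Inv z'). apply Ed, H. }
  have Inj : forall z z', sw R0 s g z = sw R0 s g z' -> z = z'.
  { intros z z' E. rewrite -(Inv z) -(Inv z') E. reflexivity. }
  split.
  - exists (sw R0 s g); intros z; apply Inv.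
  - intros s0 a. destruct (classic (s0 = R0)) as [->|hs].
    + have h0 : 0 < ar R0 by lia.
      have h1 : 1 < ar R0 by lia.
      rewrite !(rel_shape (Ordinal h0) (Ordinal h1) erefl erefl Hal). split.
      * intros [H1 H2]. split; [intros j hj; rewrite (H1 j hj); reflexivity|apply Ed, H2].
      * intros [H1 H2]. split; [intros j hj; apply Inj, H1, hj|apply Ed', H2].
    + split; intros H; exfalso; exact (Hbe _ _ hs H).
Qed.

Lemma T_huge S (R0 : sym S) (HR : 2 <= ar R0) (A : structure S) :
  (forall i, fo_models A (theta R0 i)) -> card_le (nat -> bool) (Aut A).
Proof.
  intros HT. destruct (@carrier_inh S A) as [d].
  set e := fun _ : nat => d.
  have Hin : InD R0 A := proj1 (eval_INd _ R0 A e) (HT (inl (1, 0)) e).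
  have Hout : OutD R0 A := proj1 (eval_OUTd _ R0 A e) (HT (inl (2, 0)) e).
  have Hp : AllPath R0 A.
  { intros n a ha. apply (proj1 (eval_gamma _ R0 A e n)); [exact (HT (inl (3, n)) e)|exact ha]. }
  have Hal := alpha_fact _ _ _ (fun n => HT (inl (0, n))).
  have Hbe := beta_fact _ _ _ (fun s => HT (inr s)).
  have Hsrc : forall n, exists h : nat -> A, (forall i, i < n -> isSrc R0 A (h i)) /\ injOn h n.
  { intros n. destruct (G_sound _ _ _ n 0 e (HT (inl (4, n)) e)) as [h [H1 H2]].
    - intros i hi; lia.
    - intros i j hi; lia.
    - exists h. split; auto. }
  destruct (src_seq _ _ _ Hsrc) as [s [Hs Hsi]].
  exists (fun g => exist _ (sw R0 s g) (sw_iso _ _ HR A Hin Hout Hp Hal Hbe s Hs Hsi g)).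
  intros g h E. apply (f_equal (@proj1_sig _ _)) in E. cbn [proj1_sig] in E.
  have Eq := sw_eq Hin Hout Hp s Hs Hsi.
  have C := chain_s Hin Hout Hp Hs Hsi.
  have V : forall (g : nat -> bool) i,
      sw R0 s g (s (2 * i)) = if g i then s (2 * i + 1) else s (2 * i).
  { intros g0 i. destruct (g0 i) eqn:Eg.
    - apply Eq. left. exists i, 0. auto.
    - apply Eq. right; right. split; [|reflexivity].
      intros [i' [j' [hg [E'|E']]]].
      + change (s (2 * i)) with (chain R0 (s (2 * i)) 0) in E'.
        destruct (C _ _ _ _ E') as [E1 E2]. have : i = i' by lia. intros ->. congruence.
      + change (s (2 * i)) with (chain R0 (s (2 * i)) 0) in E'.
        destruct (C _ _ _ _ E') as [E1 E2]. lia. }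
  apply functional_extensionality; intros i.
  have := f_equal (fun F => F (s (2 * i))) E. cbn beta. rewrite !V.
  destruct (g i); destruct (h i); auto; intros E'; apply Hsi in E'; lia.
Qed.
Definition encI S (fs : sym S -> nat) (i : Ix S) : nat :=
  match i with inl p => 2 * Cantor.to_nat p | inr s => 2 * fs s + 1 end.

Arguments encI {S} fs i.

Lemma encI_inj S (fs : sym S -> nat) (hfs : injective fs) i j : encI fs i = encI fs j -> i = j.
Proof.
  destruct i as [p|s]; destruct j as [q|t]; cbn [encI]; intros E.
  - f_equal. apply Cantor.to_nat_inj. lia.
  - lia.
  - lia.
  - f_equal. apply hfs. lia.
Qed.

Arguments encI_inj {S fs} hfs {i j} _.

Lemma notCompact S (hc : countable_signature S) (R0 : sym S) (HR : 2 <= ar R0) Q (HQ : goodQ Q)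
  (L : abstract_logic S) :
  geq_FO L -> expressible L (fun A : structure S => Q (Aut A)) -> ~ aleph0_compact L.
Proof.
  intros Hge [phiP HP] Hcomp.
  destruct hc as [fs hfs].
  have Hexp : forall i, expressible L (fun A => fo_models A (theta R0 i)).
  { intros i. apply Hge. exists (theta R0 i). split; [apply sent_theta|tauto]. }
  set tr := fun i => proj1_sig (constructive_indefinite_description _ (Hexp i)).
  have Htr : forall i A, models L A (tr i) <-> fo_models A (theta R0 i).
  { intros i. exact (proj2_sig (constructive_indefinite_description _ (Hexp i))). }
  set T := fun psi => psi = phiP \/ exists i, psi = tr i.
  set P := fun psi n => (psi = phiP /\ n = 0) \/ (psi <> phiP /\ exists i, psi = tr i /\ n = (encI fs i).+1).
  set code := fun psi => epsilon (inhabits 0) (P psi).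
  have Hcode : forall psi, T psi -> P psi (code psi).
  { intros psi Hpsi. apply (epsilon_spec (inhabits 0) (P psi)).
    destruct (classic (psi = phiP)) as [E|E].
    - exists 0. left; auto.
    - destruct Hpsi as [Hpsi|[i Hi]]; [contradiction|]. exists (encI fs i).+1. right. eauto. }
  have Hcount : countable_set T.
  { exists code. intros x y hx hy E.
    have Px := Hcode x hx. have Py := Hcode y hy. rewrite E in Px.
    destruct Px as [[-> E1]|[nx [i [-> E1]]]]; destruct Py as [[-> E2]|[ny [j [-> E2]]]];
      try reflexivity; try lia.
    rewrite E1 in E2. have : i = j by (apply (encI_inj hfs); lia). intros ->; reflexivity. }
  have Hbound : forall l : list (sentence L), (forall psi, In psi l -> T psi) ->
      exists N, forall psi, In psi l -> psi = phiP \/ exists i, psi = tr i /\ bnd i <= N.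
  { induction l as [|psi l IH]; intros Hl.
    - exists 0. intros psi [].
    - destruct IH as [N HN]; [intros x hx; apply Hl; right; exact hx|].
      destruct (Hl psi (or_introl erefl)) as [E|[i Ei]].
      + exists N. intros x [<-|hx]; [left; exact E|apply HN, hx].
      + exists (maxn N (bnd i)). intros x [<-|hx].
        * right. exists i. split; [exact Ei|apply leq_maxr].
        * destruct (HN x hx) as [E'|[j [Ej Hj]]]; [left; exact E'|right; exists j; split; [exact Ej|]].
          apply (leq_trans Hj), leq_maxl. }
  have Hfin : finitely_satisfiable L T.
  { intros l Hl. destruct (Hbound l Hl) as [N HN]. exists (Mstr R0 N).
    intros psi hpsi. destruct (HN psi hpsi) as [->|[i [-> Hi]]].
    - apply HP. apply rigid_Q; [exact HQ|]. apply (M_rigid _ _ HR).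
    - apply Htr. apply (M_models _ _ HR), Hi. }
  destruct (Hcomp T Hcount Hfin) as [A HA].
  have HQA : Q (Aut A) by (apply HP, HA; left; reflexivity).
  apply (proj2 HQ _ HQA). apply (T_huge _ _ HR). intros i. apply Htr, HA. right. exists i; reflexivity.
Qed.

Arguments notCompact {S} hc {R0} HR {Q} HQ L _ _ _.

Lemma ps_compact S (L : abstract_logic S) :
  closed_under_negation L -> (exists PS : proof_system L, sound PS /\ complete PS) -> aleph0_compact L.
Proof.
  intros Hneg [PS [Hs Hc]] T _ Hfs. apply NNPP; intros Hns.
  destruct (classic (exists phi, T phi)) as [[phi0 h0]|Hemp].
  - destruct (Hneg phi0) as [psi Hpsi].
    have Hent : entails L T psi.
    { intros A HA. exfalso. apply Hns. exists A. exact HA. }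
    destruct (Hc T psi Hent) as [pi [Hcon Hprem]].
    destruct (Hfs (phi0 :: premisses pi)) as [A HA].
    { intros phi [<-|h]; [exact h0|apply Hprem, h]. }
    have Hm := Hs pi A (fun phi h => HA phi (or_intror h)).
    rewrite Hcon in Hm. apply Hpsi in Hm. apply Hm, HA. left; reflexivity.
  - destruct (Hfs nil) as [A _]; [intros phi []|].
    apply Hns. exists A. intros phi hphi. exfalso. apply Hemp. exists phi; exact hphi.
Qed.

Arguments ps_compact {S L} _ _ _ _ _.

Lemma main_gen S (hc : countable_signature S) (R0 : sym S) (HR : 2 <= ar R0) Q (HQ : goodQ Q) :
  main_conclusions (fun A : structure S => Q (Aut A)).
Proof.
  split; [|split].
  - exact (notFO _ _ HR _ HQ).
  - intros L h1 h2. exact (notCompact hc HR HQ L h1 h2).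
  - intros L h1 h2 h3 Hps. exact (notCompact hc HR HQ L h1 h2 (ps_compact h3 Hps)).
Qed.

Arguments main_gen {S} hc {R0} HR {Q} HQ.

Theorem mainTheorem5 :
  forall S : signature,
    countable_signature S ->
    (exists s : sym S, 2 <= ar s) ->
    (forall Omega : Type -> Prop,
        cardinal_set Omega ->
        (forall X : Type, Omega X -> card_lt X (nat -> bool)) ->
        Omega unit ->
        main_conclusions (fun A : structure S => Omega (Aut A)))
    /\ main_conclusions (fun A : structure S => card_le (Aut A) nat)
    /\ main_conclusions (fun A : structure S => exists n : nat, card_le (Aut A) 'I_n).
Proof.
  intros S hc [R0 HR]. split; [|split].
  - intros Omega Hc Hlt Hu. exact (main_gen hc HR (goodQ_Omega _ Hc Hlt Hu)).
  - exact (main_gen hc HR goodQ_countable).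
  - exact (main_gen hc HR goodQ_finite).
Qed.
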